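(* Let $k\ge1$ be an integer and $\rho\in(0,1)$, and let $\tilde\varepsilon=\rho\,\frac{1+\cos(\frac{2k-1}{2k}\pi)}{1-\cos(\frac{2k-1}{2k}\pi)}$. For $\varepsilon\in[0,\tilde\varepsilon]$ let $p_\varepsilon(X)=T_k\big(\frac{2X}{\rho+\varepsilon}-\frac{\rho-\varepsilon}{\rho+\varepsilon}\big)$ and write $p_\varepsilon(X)=\sum_{i=0}^kc_iX^i$. Then: (i) $\operatorname{sign}(c_i)=(-1)^{k-i}$ for $i=1,\dots,k$, and $(-1)^kc_0\ge0$; (ii) on $[-\varepsilon,\rho]$, $|p_\varepsilon|$ attains its maximum at the points $m_i=\frac{(\rho+\varepsilon)\cos(\frac{i\pi}{k})+\rho-\varepsilon}{2}\in[-\varepsilon,\rho]$, $i=0,\dots,k$, and $p_\varepsilon(m_i)=(-1)^i$.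
   Context: $T_k$ is the Chebyshev polynomial of the first kind of degree $k$, i.e. $T_k(\cos\theta)=\cos(k\theta)$. *)

(* Defs.v *)
From HB Require Import structures.
From mathcomp Require Import all_boot all_order all_algebra.
From mathcomp Require Import all_classical all_reals all_analysis.
Set Implicit Arguments. Unset Strict Implicit. Unset Printing Implicit Defensive.
Import Order.TTheory GRing.Theory Num.Theory.
Local Open Scope ring_scope.

(* Chebyshev polynomials of the first kind, by the standard recurrence
   T_0 = 1, T_1 = X, T_{n+2} = 2 X T_{n+1} - T_n
   (these are exactly the polynomials with T_k(cos t) = cos(k t)). *)
Fixpoint cheb_pair (R : ringType) (n : nat) : {poly R} * {poly R} :=
  match n with
  | 0%N => (1, 'X)
  | n'.+1 => let: (a, b) := cheb_pair R n' in (b, 2%:R *: 'X * b - a)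
  end.

Definition chebT (R : ringType) (n : nat) : {poly R} := (cheb_pair R n).1.

Definition p_eps (R : realType) (k : nat) (rho eps : R) : {poly R} :=
  chebT R k \Po ((2 / (rho + eps)) *: 'X - ((rho - eps) / (rho + eps))%:P).

Definition eps_tilde (R : realType) (k : nat) (rho : R) : R :=
  let c := cos (((2 * k)%N.-1)%:R / (2 * k)%:R * pi) in
  rho * (1 + c) / (1 - c).

Definition m_pt (R : realType) (k : nat) (rho eps : R) (i : nat) : R :=
  ((rho + eps) * cos (i%:R * pi / k%:R) + rho - eps) / 2.

(* Main.v *)
Require Import Defs.
From HB Require Import structures.
From mathcomp Require Import all_boot all_order all_algebra.
From mathcomp Require Import all_classical all_reals all_analysis.
From mathcomp Require Import ring lra zify.
Import Order.TTheory GRing.Theory Num.Theory.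
Local Open Scope ring_scope.

Lemma cheb_pairS (R : nzRingType) n :
  cheb_pair R n.+1 = ((cheb_pair R n).2, 2%:R *: 'X * (cheb_pair R n).2 - (cheb_pair R n).1).
Proof. by rewrite /=; case: (cheb_pair R n). Qed.

Lemma chebT0 (R : nzRingType) : chebT R 0 = 1. Proof. by []. Qed.
Lemma chebT1 (R : nzRingType) : chebT R 1 = 'X. Proof. by []. Qed.
Lemma chebT_snd (R : nzRingType) n : (cheb_pair R n).2 = chebT R n.+1.
Proof. by rewrite /chebT cheb_pairS. Qed.
Lemma chebTSS (R : nzRingType) n :
  chebT R n.+2 = 2%:R *: 'X * chebT R n.+1 - chebT R n.
Proof. by rewrite /chebT !cheb_pairS. Qed.

Lemma chebT_cos (R : realType) n (t : R) : (chebT R n).[cos t] = cos (n%:R * t).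
Proof.
suff : (chebT R n).[cos t] = cos (n%:R * t) /\ (chebT R n.+1).[cos t] = cos (n.+1%:R * t) by case.
elim: n => [|n [IH1 IH2]].
  by rewrite chebT0 chebT1 !hornerE cos0.
split => //; rewrite chebTSS !hornerE IH1 IH2.
have -> : n.+2%:R * t = n.+1%:R * t + t by rewrite -[n.+2]addn1 natrD mulrDl mul1r.
have -> : n%:R * t = n.+1%:R * t - t by rewrite -[n.+1]addn1 natrD mulrDl mul1r addrK.
rewrite cosB cosD; ring.
Qed.

Lemma chebT_size_lc (R : realType) n : size (chebT R n) = n.+1 /\ 0 < lead_coef (chebT R n).
Proof.
suff : (size (chebT R n) = n.+1 /\ 0 < lead_coef (chebT R n)) /\
       (size (chebT R n.+1) = n.+2 /\ 0 < lead_coef (chebT R n.+1)) by case.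
elim: n => [|n [[s1 l1] [s2 l2]]].
  by rewrite chebT0 chebT1 size_polyC lead_coefC size_polyX lead_coefX oner_eq0 ltr01.
have nz : chebT R n.+1 != 0 by rewrite -size_poly_gt0 s2.
have sM : size (2%:R *: 'X * chebT R n.+1) = n.+3.
  by rewrite -scalerAl size_scale ?pnatr_eq0 // mulrC size_mulX ?s2.
have lM : lead_coef (2%:R *: 'X * chebT R n.+1) = 2%:R * lead_coef (chebT R n.+1).
  by rewrite -scalerAl lead_coefZ (mulrC 'X) lead_coefMX.
have lt : (size (- chebT R n) < size (2%:R *: 'X * chebT R n.+1)%R)%N by rewrite size_polyN sM s1.
split=> //; rewrite chebTSS size_polyDl // lead_coefDl // sM lM; split=> //.
by rewrite mulr_gt0.
Qed.
Lemma coef_XsubCM (R : nzRingType) (x : R) (Q : {poly R}) i :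
  (('X - x%:P) * Q)`_i = (if i == 0%N then 0 else Q`_i.-1) - x * Q`_i.
Proof. by rewrite mulrBl coefB coefXM coefCM. Qed.

Lemma step {R : realType} (Q : {poly R}) n (x : R) :
  size Q = n.+1 -> (forall i, (i <= n)%N -> 0 < (-1) ^+ (n - i) * Q`_i) -> 0 <= x ->
  (forall i, (1 <= i <= n.+1)%N -> 0 < (-1) ^+ (n.+1 - i) * (('X - x%:P) * Q)`_i) /\
  0 <= (-1) ^+ n.+1 * (('X - x%:P) * Q)`_0 /\
  (0 < x -> 0 < (-1) ^+ n.+1 * (('X - x%:P) * Q)`_0).
Proof.
move=> sQ HQ x0.
have e0 : (-1) ^+ n.+1 * (('X - x%:P) * Q)`_0 = x * ((-1) ^+ (n - 0) * Q`_0).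
  rewrite coef_XsubCM /= subn0 exprS; ring.
have h0 := HQ 0%N (leq0n n).
split; last first.
  rewrite e0; split; [exact: mulr_ge0 x0 (Order.POrderTheory.ltW h0) | move=> xp; exact: mulr_gt0].
case=> [//|i] /andP [_ hi].
rewrite coef_XsubCM /= subSS.
case: (ltngtP i n) => [lt||eq]; last first.
- have -> : Q`_i.+1 = 0 by rewrite nth_default // sQ eq.
  by move: (HQ i); rewrite eq subnn => /(_ (leqnn n)); rewrite expr0 !mul1r mulr0 subr0.
- by move=> gt; move: hi; rewrite ltnS leqNgt gt.
have e : (-1) ^+ (n - i) = - (-1) ^+ (n - i.+1) :> R by rewrite -subnSK // exprS mulN1r.
have h1 := HQ i (ltnW lt). have h2 := HQ i.+1 lt.
have -> : (-1) ^+ (n - i) * (Q`_i - x * Q`_i.+1) =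
   (-1) ^+ (n - i) * Q`_i + x * ((-1) ^+ (n - i.+1) * Q`_i.+1) by rewrite e; ring.
apply: (lt_le_trans h1); rewrite lerDl; exact: mulr_ge0 x0 (Order.POrderTheory.ltW h2).
Qed.

Lemma prod_pos (R : realType) (s : seq R) :
  all (fun r => 0 < r) s -> forall i, (i <= size s)%N ->
  0 < (-1) ^+ (size s - i) * (\prod_(r <- s) ('X - r%:P))`_i.
Proof.
elim: s => [|x s IH] /=.
  by move=> _ [|//] _; rewrite big_nil expr0 mul1r coefC.
move=> /andP [xp al] i hi; rewrite big_cons.
have [h1 [_ h3]] := @step R _ _ x (size_prod_XsubC s id) (IH al) (Order.POrderTheory.ltW xp).
case: i hi => [|i] hi; first by rewrite subn0; exact: h3.
by apply: h1.
Qed.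

Lemma sg_of_signed (R : realType) m (v : R) : 0 < (-1) ^+ m * v -> Num.sg v = (-1) ^+ m.
Proof.
rewrite -signr_odd; case: (odd m) => /=.
  by rewrite expr1 mulN1r oppr_gt0 => h; rewrite ltr0_sg.
by rewrite expr0 mul1r => h; rewrite gtr0_sg.
Qed.

Lemma cos_npi (R : realType) (i : nat) : cos (i%:R * pi) = (-1) ^+ i :> R.
Proof.
elim: i => [|i IH]; first by rewrite mul0r cos0 expr0.
by rewrite -addn1 natrD mulrDl mul1r cosDpi IH exprD expr1 mulrN1.
Qed.

Lemma cos_halfodd (R : realType) (j : nat) : cos ((2 * j + 1)%:R / 2 * pi) = 0 :> R.
Proof.
elim: j => [|j IH]; first by rewrite muln0 add0n mul1r mulrC cos_pihalf.
have -> : ((2 * j.+1 + 1)%:R / 2 * pi) = (2 * j + 1)%:R / 2 * pi + pi :> R.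
  rewrite mulnS !natrD; field.
  by [].
by rewrite cosDpi IH oppr0.
Qed.

Lemma theta_itv (R : realType) (k j : nat) : (j < k)%N ->
  0 <= (2 * j + 1)%:R / (2 * k)%:R * (pi : R) <= pi.
Proof.
move=> jk; have k0 : 0 < (2 * k)%:R :> R by rewrite ltr0n; lia.
apply/andP; split.
  by apply: mulr_ge0; [apply: divr_ge0|apply: Order.POrderTheory.ltW; exact: pi_gt0].
rewrite -[X in _ <= X]mul1r ler_pM2r ?pi_gt0 // ler_pdivrMr // mul1r ler_nat; lia.
Qed.

Lemma theta_lt (R : realType) (k i j : nat) : (0 < k)%N -> (i < j)%N ->
  (2 * i + 1)%:R / (2 * k)%:R * (pi : R) < (2 * j + 1)%:R / (2 * k)%:R * pi.
Proof.
move=> k0 ij; rewrite ltr_pM2r ?pi_gt0 // ltr_pM2r ?invr_gt0 ?ltr0n ?ltr_nat; lia.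
Qed.

Lemma size_aux (k' n : nat) : ((n + (2 + k'.+1).-1).-1 = k'.+2 -> n = 1)%N.
Proof. by rewrite -!subn1; lia. Qed.

Theorem lemma6 (R : realType) (k : nat) (rho eps : R) :
  (1 <= k)%N -> 0 < rho < 1 -> 0 <= eps <= eps_tilde k rho ->
  (* (i) *)
  ((forall i : nat, (1 <= i <= k)%N ->
      Num.sg (p_eps k rho eps)`_i = (-1) ^+ (k - i)) /\
   0 <= (-1) ^+ k * (p_eps k rho eps)`_0) /\
  (* (ii) *)
  (forall i : nat, (i <= k)%N ->
     -eps <= m_pt k rho eps i <= rho /\
     (p_eps k rho eps).[m_pt k rho eps i] = (-1) ^+ i /\
     (forall x : R, -eps <= x <= rho ->
        `|(p_eps k rho eps).[x]| <= `|(p_eps k rho eps).[m_pt k rho eps i]|)).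
Proof.
move=> k1 /andP [r0 r1] /andP [e0 et].
have [k' kE] : exists k', k = k'.+1 by exists k.-1; rewrite prednK.
subst k.
have S0 : 0 < rho + eps by lra.
have Snz : rho + eps != 0 by rewrite gt_eqF.
set a := 2 / (rho + eps).
set b := (rho - eps) / (rho + eps).
have a0 : 0 < a by rewrite /a divr_gt0.
set lin := a *: 'X - b%:P.
have Pdef : p_eps k'.+1 rho eps = chebT R k'.+1 \Po lin by [].
have linE x : lin.[x] = a * x - b by rewrite /lin !hornerE.
have sb : (size (- b%:P) < size (a *: 'X))%N.
  by rewrite size_polyN size_scale ?size_polyX ?gt_eqF // (leq_ltn_trans (size_polyC_leq1 _)).
have slin : size lin = 2.
  by rewrite /lin size_polyDl // size_scale ?size_polyX // gt_eqF.
have llin : lead_coef lin = a.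
  by rewrite /lin lead_coefDl // lead_coefZ lead_coefX mulr1.
have evalP x : (p_eps k'.+1 rho eps).[x] = (chebT R k'.+1).[a * x - b].
  by rewrite Pdef horner_comp linE.
have kn0 : k'.+1%:R != 0 :> R by rewrite pnatr_eq0.
have partii : forall i : nat, (i <= k'.+1)%N ->
     -eps <= m_pt k'.+1 rho eps i <= rho /\
     (p_eps k'.+1 rho eps).[m_pt k'.+1 rho eps i] = (-1) ^+ i /\
     (forall x : R, -eps <= x <= rho ->
        `|(p_eps k'.+1 rho eps).[x]| <= `|(p_eps k'.+1 rho eps).[m_pt k'.+1 rho eps i]|).
  move=> i ik.
  set C := cos (i%:R * (pi : R) / k'.+1%:R).
  have Cl : -1 <= C by rewrite cos_geN1.
  have Cu : C <= 1 by rewrite cos_le1.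
  have mE : m_pt k'.+1 rho eps i = ((rho + eps) * C + rho - eps) / 2 by [].
  have val : (p_eps k'.+1 rho eps).[m_pt k'.+1 rho eps i] = (-1) ^+ i.
    rewrite evalP.
    have -> : a * m_pt k'.+1 rho eps i - b = C.
      by rewrite mE /a /b; field.
    rewrite /C chebT_cos.
    have -> : k'.+1%:R * (i%:R * pi / k'.+1%:R) = i%:R * (pi : R) by field.
    exact: cos_npi.
  split; first by rewrite mE; apply/andP; split; nra.
  split => // x /andP [x1 x2].
  rewrite val normrX normrN1 expr1n evalP.
  set y := a * x - b.
  have yS : y * (rho + eps) = 2 * x - (rho - eps) by rewrite /y /a /b; field.
  have y1 : -1 <= y by nra.
  have y2 : y <= 1 by nra.
  have hy : cos (acos y) = y by apply: acosK; rewrite in_itv /= y1 y2.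
  by rewrite -hy chebT_cos cos_max.
split; last exact: partii.
pose y (j : nat) : R := cos ((2 * j + 1)%:R / (2 * k'.+1)%:R * pi).
pose Xr (j : nat) : R := ((rho + eps) * y j + rho - eps) / 2.
have k2 : (2 * k'.+1)%:R != 0 :> R by rewrite pnatr_eq0.
have rootX j : (j < k'.+1)%N -> root (p_eps k'.+1 rho eps) (Xr j).
  move=> jk; rewrite /root evalP.
  have -> : a * Xr j - b = y j by rewrite /Xr /a /b; field.
  rewrite /y chebT_cos.
  have -> : k'.+1%:R * ((2 * j + 1)%:R / (2 * k'.+1)%:R * pi) = (2 * j + 1)%:R / 2 * (pi : R).
    rewrite natrM; field; apply/negP => /eqP h; have : 0 <= k'%:R :> R by exact: ler0n.
    lra.
  by rewrite cos_halfodd.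
have yE j : y j = (2 * Xr j - rho + eps) / (rho + eps) by rewrite /Xr; field.
have mem_th j : (j < k'.+1)%N -> (2 * j + 1)%:R / (2 * k'.+1)%:R * (pi : R) \in `[0, pi].
  by move=> jk; rewrite in_itv /= theta_itv.
have Xinj i j : (i < k'.+1)%N -> (j < k'.+1)%N -> Xr i = Xr j -> i = j.
  move=> ik jk eq.
  have ey : y i = y j by rewrite !yE eq.
  have eth := cos_inj (mem_th _ ik) (mem_th _ jk) ey.
  case: (ltngtP i j) => // h.
    by have := theta_lt R _ _ _ (ltn0Sn k') h; rewrite eth ltxx.
  by have := theta_lt R _ _ _ (ltn0Sn k') h; rewrite eth ltxx.
set P := p_eps k'.+1 rho eps.
set tl := [seq Xr (k' - j)%N | j <- iota 1 k'].
have allr : all (root P) (Xr k' :: tl).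
  rewrite /= rootX //=; apply/allP => z /mapP [j]; rewrite mem_iota => /andP [j1 j2] ->.
  apply: rootX; lia.
have un : uniq (Xr k' :: tl).
  have -> : Xr k' :: tl = [seq Xr (k' - j)%N | j <- iota 0 k'.+1] by rewrite /= subn0.
  rewrite map_inj_in_uniq ?iota_uniq // => u v; rewrite !mem_iota => /andP [_ hu] /andP [_ hv] h.
  have := Xinj _ _ _ _ h; lia.
have [q hq] := uniq_roots_prod_XsubC allr (ltac:(by rewrite uniq_rootsE)).
move: hq; rewrite big_cons; set Q := \prod_(z <- tl) ('X - z%:P) => hq.
have sQ : size Q = k'.+1 by rewrite size_prod_XsubC size_map size_iota.
have [sT lT] := chebT_size_lc R k'.+1.
have sP : size P = k'.+2 by rewrite /P Pdef size_comp_poly2.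
have Pnz : P != 0 by rewrite -size_poly_gt0 sP.
have qnz : q != 0 by apply: contraNneq Pnz => q0; rewrite hq q0 mul0r.
have Qnz : Q != 0 by rewrite -size_poly_gt0 sQ.
have XC : 'X - (Xr k')%:P != 0 by rewrite polyXsubC_eq0.
have XQnz : ('X - (Xr k')%:P) * Q != 0 by rewrite mulf_neq0.
have sq : size q = 1%N.
  have h2 : size ('X - (Xr k')%:P) = 2%N by rewrite size_XsubC.
  move: sP; rewrite hq (size_mul qnz XQnz) (size_mul XC Qnz) sQ h2 => h.
  exact: size_aux h.
have /size_poly1P [c c0 qE] : size q == 1%N by rewrite sq.
have lP : lead_coef P = c.
  rewrite hq qE lead_coefM lead_coefC.
  have /monicP -> : ('X - (Xr k')%:P) * Q \is monic by rewrite monicMl ?monicXsubC // monic_prod_XsubC.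
  by rewrite mulr1.
have cpos : 0 < c.
  rewrite -lP /P Pdef lead_coef_comp ?slin // llin.
  by apply: mulr_gt0 => //; apply: exprn_gt0.
have Pcoef i : P`_i = c * (('X - (Xr k')%:P) * Q)`_i by rewrite hq qE coefCM.
have th_pos : 0 < (2 * k' + 1)%:R / (2 * k'.+1)%:R * (pi : R).
  apply: mulr_gt0; last exact: pi_gt0.
  by apply: divr_gt0; rewrite ltr0n; clear; lia.
have ylt1 : y k' < 1.
  have m0 : (0:R) \in `[0, pi] by rewrite in_itv /= lexx (Order.POrderTheory.ltW (pi_gt0 R)).
  by rewrite /y -[X in _ < X]cos0 ltr_cos ?mem_th.
have X0 : 0 <= Xr k'.
  move: et; rewrite /eps_tilde.
  have -> : ((2 * k'.+1).-1 = 2 * k' + 1)%N by clear; rewrite -subn1; lia.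
  rewrite -/(y k') ler_pdivlMr ?subr_gt0 // => h.
  rewrite /Xr; apply: divr_ge0 => //.
  have -> : (rho + eps) * y k' + rho - eps = rho * (1 + y k') - eps * (1 - y k') by ring.
  by rewrite subr_ge0.
have tlpos : all (fun r => 0 < r) tl.
  apply/allP => z /mapP [j]; rewrite mem_iota => /andP [j1 j2] ->.
  apply: (le_lt_trans X0).
  have hy : y k' < y (k' - j)%N.
    rewrite /y ltr_cos ?mem_th //; last by clear -j1 j2; lia.
    apply: theta_lt; clear -j1 j2; lia.
  rewrite /Xr ltr_pM2r ?invr_gt0 // ltrBlDr subrK ltrD2r ltr_pM2l //.
have sQ' : size Q = (size tl).+1 by rewrite size_prod_XsubC.
have stl : size tl = k' by rewrite size_map size_iota.
have [h1 [h2 _]] := @step R Q k' (Xr k') (sQ) (ltac:(rewrite -stl; exact: prod_pos tlpos)) X0.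
split.
  move=> i /andP [i1 ik].
  rewrite Pcoef sgrM gtr0_sg // mul1r.
  apply: sg_of_signed; apply: h1; by rewrite i1 ik.
by rewrite Pcoef mulrCA; apply: mulr_ge0 => //; exact: Order.POrderTheory.ltW.
Qed.
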